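(* Let $n\in\mathbb N$ and $M>0$. Let $X,Y$ be independent, identically distributed real random variables with $|X|\le\big(\frac{2n-1}{3M}\big)^{\frac{1}{2n-1}}$ almost surely and ${\bf E}[X^{2j-1}]=0$ for all $j=1,\dots,n$. Then $${\bf E}\big[|X-Y|^{2n+1}\big]-2\,{\bf E}\big[X^{2n+1}\big]-M\big({\bf E}[X^{2n}]\big)^2\ge 0.$$ *)

(* Defs.v *)
From HB Require Import structures.
From mathcomp Require Import all_boot all_order all_algebra.
From mathcomp Require Import all_classical all_reals all_analysis.
Set Implicit Arguments.
Unset Strict Implicit.
Unset Printing Implicit Defensive.
Import Order.TTheory GRing.Theory Num.Theory.
Local Open Scope classical_set_scope.
Local Open Scope ring_scope.

Definition independent_RV d (T : measurableType d) (R : realType)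
  (P : probability T R) (X Y : {RV P >-> R}) : Prop :=
  forall A B : set R, measurable A -> measurable B ->
    P (X @^-1` A `&` Y @^-1` B) = (P (X @^-1` A) * P (Y @^-1` B))%E.

Definition identically_distributed d (T : measurableType d) (R : realType)
  (P : probability T R) (X Y : {RV P >-> R}) : Prop :=
  forall A : set R, measurable A -> distribution P X A = distribution P Y A.

(* Main.v *)
Require Import Defs.
From HB Require Import structures.
From mathcomp Require Import all_boot all_order all_algebra.
From mathcomp Require Import all_classical all_reals all_analysis.
From mathcomp Require Import measurable_realfun.
From mathcomp.algebra_tactics Require Import ring lra.
From mathcomp Require Import zify.
Import Order.TTheory GRing.Theory Num.Theory.
Local Open Scope classical_set_scope.
Local Open Scope ring_scope.

Section Alg.
Context (R : realFieldType).

Lemma L1 (a b : R) k : 0 <= a -> 0 <= b ->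
  (a + b) ^+ k.+1 <= a ^+ k.+1 + k.+1%:R * (a + b) ^+ k * b.
Proof.
move=> a0 b0; elim: k => [|k IH]; first by rewrite !expr1 expr0 mulr1 mul1r.
have hS : 0 <= a + b by lra.
have hk1 : a ^+ k.+1 <= (a + b) ^+ k.+1.
  by apply: (lerXn2r k.+1); rewrite ?nnegrE //; lra.
have H := ler_wpM2r hS IH.
rewrite exprSr; apply: (le_trans H).
have : 0 <= b * ((a + b) ^+ k.+1 - a ^+ k.+1) by apply: mulr_ge0 => //; rewrite subr_ge0.
rewrite (exprSr a k.+1) (exprSr (a + b) k) [k.+2%:R]mulrS.
set A := a ^+ k.+1; set U := (a + b) ^+ k; set w := k.+1%:R.
move=> h; nra.
Qed.

Lemma L2 (a b : R) k : 0 <= a -> 0 <= b ->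
  a ^+ k.+3 + k.+3%:R * a ^+ k.+2 * b + k.+3%:R * a * b ^+ k.+2 + b ^+ k.+3
  <= (a + b) ^+ k.+3.
Proof.
move=> a0 b0; elim: k => [|k IH].
  have e : (a + b) ^+ 3 = a ^+ 3 + 3%:R * a ^+ 2 * b + 3%:R * a * b ^+ 2 + b ^+ 3.
    by ring.
  by rewrite e.
have hS : 0 <= a + b by lra.
have H := ler_wpM2r hS IH.
rewrite [(a + b) ^+ k.+4]exprSr; apply: (le_trans _ H).
rewrite [k.+4%:R]mulrS.
have e1 : a ^+ k.+4 = a ^+ k.+3 * a by rewrite exprSr.
have e2 : b ^+ k.+4 = b ^+ k.+3 * b by rewrite exprSr.
have e3 : a ^+ k.+3 = a ^+ k.+2 * a by rewrite exprSr.
have e4 : b ^+ k.+3 = b ^+ k.+2 * b by rewrite exprSr.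
rewrite e1 e2 e3 e4.
set A := a ^+ k.+2; set B := b ^+ k.+2; set w := k.+3%:R.
have hA : 0 <= A by apply: exprn_ge0.
have hB : 0 <= B by apply: exprn_ge0.
have hw : 0 <= w by rewrite /w ler0n.
have p1 := mulr_ge0 (mulr_ge0 hw hA) (mulr_ge0 b0 b0).
have p2 := mulr_ge0 (mulr_ge0 hw hB) (mulr_ge0 a0 a0).
nra.
Qed.

End Alg.

Section G.
Context (R : realFieldType).

Definition pos (t : R) := Num.max t 0.
Definition neg (t : R) := Num.max (- t) 0.

Lemma posE t : 0 <= t -> pos t = t. Proof. by move=> h; rewrite /pos max_l. Qed.
Lemma posN t : t <= 0 -> pos t = 0. Proof. by move=> h; rewrite /pos max_r. Qed.
Lemma negE t : t <= 0 -> neg t = - t.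
Proof. by move=> h; rewrite /neg max_l // oppr_ge0. Qed.
Lemma negN t : 0 <= t -> neg t = 0.
Proof. by move=> h; rewrite /neg max_r // oppr_le0. Qed.
Lemma pos_ge0 t : 0 <= pos t. Proof. by rewrite /pos le_max lexx orbT. Qed.
Lemma neg_ge0 t : 0 <= neg t. Proof. by rewrite /neg le_max lexx orbT. Qed.
Lemma pos_neg t : t = pos t - neg t.
Proof.
case: (leP 0 t) => h; first by rewrite posE // negN // subr0.
have h' := ltW h.
by rewrite posN // negE // opprK add0r.
Qed.

Lemma evenN (b : R) n : (- b) ^+ (2 * n) = b ^+ (2 * n).
Proof. by rewrite !exprM sqrrN. Qed.
Lemma oddN (b : R) n : (- b) ^+ (2 * n).+1 = - b ^+ (2 * n).+1.
Proof. by rewrite exprSr evenN exprSr mulrN. Qed.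

Lemma L3 (a c M K : R) m : (0 < m)%N -> 0 <= a -> a <= c -> 0 <= M ->
  M * c ^+ m.-1 <= K -> M * a ^+ m <= K * a.
Proof.
move=> m0 a0 ac M0 MK.
have e : a ^+ m = a ^+ m.-1 * a by rewrite -exprSr prednK.
rewrite e mulrA; apply: ler_wpM2r => //.
apply: le_trans MK; apply: ler_wpM2l => //.
by apply: (lerXn2r m.-1); rewrite ?nnegrE //; apply: le_trans ac.
Qed.

Context (n : nat).
Context (n0 : (0 < n)%N).
Let m := (2 * n)%N.
Definition Kc : R := (2 * n).-1%:R / 3.
Definition phi (t : R) := ((2 * n).+1)%:R * pos t ^+ (2 * n) - Kc * neg t ^+ (2 * n).
Definition Gf (M x y : R) := `|x - y| ^+ (2 * n).+1 - x ^+ (2 * n).+1 - y ^+ (2 * n).+1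
  - M * x ^+ (2 * n) * y ^+ (2 * n) + x * phi y + y * phi x.

Lemma m0 : (0 < 2 * n)%N. Proof. by rewrite muln_gt0. Qed.

Lemma consts : [/\ 0 <= Kc, 0 <= ((2 * n).+1)%:R - 1 - Kc &
   0 <= ((2 * n).+1)%:R - 2 * Kc].
Proof.
have e : ((2 * n).+1)%:R = ((2 * n).-1)%:R + 2 :> R.
  by rewrite -[in LHS](prednK m0) -addn2 natrD.
rewrite e /Kc.
have : 0 <= ((2 * n).-1)%:R :> R by rewrite ler0n.
set r := ((2 * n).-1)%:R; move=> hr.
split; lra.
Qed.

Lemma GfC (M x y : R) : Gf M x y = Gf M y x.
Proof. rewrite /Gf distrC; ring. Qed.

Lemma caseA (M c x y : R) : 0 <= M -> M * c ^+ (2 * n).-1 <= Kc ->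
  0 <= y -> y <= x -> x <= c -> 0 <= Gf M x y.
Proof.
move=> M0 MK y0 yx xc.
have x0 : 0 <= x by apply: le_trans yx.
have [K0 c1 c2] := consts.
rewrite /Gf /phi posE // posE // negN // negN // expr0n /= (negbTE (lt0n_neq0 m0)) /=.
rewrite !mulr0 !subr0 ger0_norm ?subr_ge0 //.
have f1 := @L1 R (x - y) y (2 * n) (ltac:(by rewrite subr_ge0)) y0.
rewrite subrK in f1.
have f2 := @L3 x c M Kc (2 * n) m0 x0 xc M0 MK.
have Y0 : 0 <= y ^+ (2 * n) by apply: exprn_ge0.
have f2' := ler_wpM2r Y0 f2.
have f3 : y ^+ (2 * n) * y <= y ^+ (2 * n) * x by apply: ler_wpM2l.
have f4 := mulr_ge0 c1 (mulr_ge0 x0 Y0).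
rewrite !exprSr in f1 *.
set X := x ^+ (2 * n) in f1 f2' *; set Y := y ^+ (2 * n) in f2' f3 f4 Y0 *.
set Z := (x - y) ^+ (2 * n) in f1 *.
set Nr := ((2 * n).+1)%:R in f1 f4 *.
nra.
Qed.


Lemma negK0 : (0 : R) ^+ (2 * n) = 0.
Proof. by rewrite expr0n (negbTE (lt0n_neq0 m0)). Qed.

Lemma caseB (M c x b : R) : 0 <= M -> M * c ^+ (2 * n).-1 <= Kc ->
  0 <= x -> x <= c -> 0 <= b -> 0 <= Gf M x (- b).
Proof.
move=> M0 MK x0 xc b0.
have [K0 c1 c2] := consts.
have nb : - b <= 0 by rewrite oppr_le0.
rewrite /Gf /phi (posE _ x0) (negN _ x0) (posN _ nb) (negE _ nb) !opprK.
rewrite negK0 !mulr0 !subr0 ger0_norm; last by lra.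
rewrite evenN oddN.
pose k := (2 * n).-2.
have ek : (2 * n)%N = k.+2.
  by rewrite /k; lia.
have f := @L2 R x b k x0 b0.
rewrite -ek in f.
have f2 := @L3 x c M Kc (2 * n) m0 x0 xc M0 MK.
have B0 : 0 <= b ^+ (2 * n) by apply: exprn_ge0.
have f2' := ler_wpM2r B0 f2.
have f4 := mulr_ge0 c2 (mulr_ge0 x0 B0).
have f5 := mulr_ge0 B0 b0.
rewrite !exprSr in f *.
set X := x ^+ (2 * n) in f f2' *; set B := b ^+ (2 * n) in f f2' f4 f5 B0 *.
set Nr := ((2 * n).+1)%:R in f f4 *.
set S := (x + b) ^+ (2 * n) in f *.
nra.
Qed.

Lemma caseC (M c a b : R) : 0 <= M -> M * c ^+ (2 * n).-1 <= Kc ->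
  0 <= a -> a <= c -> 0 <= b -> 0 <= Gf M (- a) (- b).
Proof.
move=> M0 MK a0 ac b0.
have [K0 c1 c2] := consts.
have nb : - b <= 0 by rewrite oppr_le0.
have na : - a <= 0 by rewrite oppr_le0.
rewrite /Gf /phi (posN _ nb) (negE _ nb) (posN _ na) (negE _ na) !opprK.
rewrite negK0 !mulr0 !sub0r !evenN !oddN.
have f2 := @L3 a c M Kc (2 * n) m0 a0 ac M0 MK.
have B0 : 0 <= b ^+ (2 * n) by apply: exprn_ge0.
have A0 : 0 <= a ^+ (2 * n) by apply: exprn_ge0.
have f2' := ler_wpM2r B0 f2.
have f4 := mulr_ge0 K0 (mulr_ge0 b0 A0).
have f5 := mulr_ge0 B0 b0.
have f6 := mulr_ge0 A0 a0.
have f7 : 0 <= `|- a + b| ^+ (2 * n).+1 by apply: exprn_ge0.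
rewrite !exprSr in f7 *.
set A := a ^+ (2 * n) in f2' f4 f6 A0 *; set B := b ^+ (2 * n) in f2' f5 B0 *.
set Z := `|- a + b| ^+ (2 * n) in f7 *.
nra.
Qed.

Lemma G_ge0 (M c x y : R) : 0 <= M -> M * c ^+ (2 * n).-1 <= Kc ->
  `|x| <= c -> `|y| <= c -> 0 <= Gf M x y.
Proof.
move=> M0 MK xc yc.
have xc' : x <= c by apply: le_trans (ler_norm x) xc.
have yc' : y <= c by apply: le_trans (ler_norm y) yc.
have nxc : - x <= c by rewrite -normrN in xc; apply: le_trans (ler_norm _) xc.
have nyc : - y <= c by rewrite -normrN in yc; apply: le_trans (ler_norm _) yc.
case: (leP 0 x) => x0; case: (leP 0 y) => y0.
- case: (leP y x) => yx; first exact: (caseA _ _ _ _ M0 MK).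
  by rewrite GfC; apply: (caseA _ _ _ _ M0 MK) => //; apply: ltW.
- by rewrite -(opprK y); apply: (caseB _ _ _ _ M0 MK) => //; rewrite oppr_ge0 ltW.
- by rewrite GfC -(opprK x); apply: (caseB _ _ _ _ M0 MK) => //; rewrite oppr_ge0 ltW.
- rewrite -(opprK x) -(opprK y); apply: (caseC _ _ _ _ M0 MK) => //; rewrite oppr_ge0 ltW //.
Qed.

Definition phip (t : R) := ((2 * n).+1)%:R * pos t ^+ (2 * n).
Definition phin (t : R) := Kc * neg t ^+ (2 * n).

Definition Lhs (x y : R) := `|x - y| ^+ (2 * n).+1 + neg (x ^+ (2 * n).+1)
  + neg (y ^+ (2 * n).+1) + pos x * phip y + neg x * phin y
  + pos y * phip x + neg y * phin x.
Definition Rhs (M x y : R) := pos (x ^+ (2 * n).+1) + pos (y ^+ (2 * n).+1)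
  + (M * x ^+ (2 * n)) * y ^+ (2 * n) + neg x * phip y + pos x * phin y
  + neg y * phip x + pos y * phin x.

Lemma LR_ident (M x y : R) : Lhs x y - Rhs M x y = Gf M x y.
Proof.
have hx := pos_neg x; have hy := pos_neg y.
have hxN := pos_neg (x ^+ (2 * n).+1); have hyN := pos_neg (y ^+ (2 * n).+1).
rewrite /Lhs /Rhs /Gf /phi /phip /phin.
set px := pos x in hx hxN hyN *; set nx := neg x in hx hxN hyN *.
set py := pos y in hy hxN hyN *; set ny := neg y in hy hxN hyN *.
set XN := x ^+ (2 * n).+1 in hxN *; set YN := y ^+ (2 * n).+1 in hyN *.
set pXN := pos XN in hxN *; set nXN := neg XN in hxN *.
set pYN := pos YN in hyN *; set nYN := neg YN in hyN *.
set D := `|x - y| ^+ (2 * n).+1.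
set Xm := x ^+ (2 * n); set Ym := y ^+ (2 * n).
rewrite hxN hyN hx hy.
ring.
Qed.

Lemma LR (M c x y : R) : 0 <= M -> M * c ^+ (2 * n).-1 <= Kc ->
  `|x| <= c -> `|y| <= c -> Rhs M x y <= Lhs x y.
Proof.
move=> M0 MK xc yc; rewrite -subr_ge0 LR_ident; exact: (G_ge0 _ _ _ _ M0 MK xc yc).
Qed.

End G.

Set Implicit Arguments.
Unset Strict Implicit.
Unset Printing Implicit Defensive.

Ltac mt := repeat first
 [ exact: measurable_cst
 | exact: measurable_funPT
 | exact: measurable_id
 | apply: measurable_funD
 | apply: measurable_funB
 | apply: measurable_funM
 | apply: measurable_funX
 | apply: measurable_maxr
 | apply: measurable_funN
 | (apply: measurableT_comp; first exact: normr_measurable)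
 ].

Section Meas.
Context d (T : measurableType d) (R : realType) (P : probability T R).
Local Open Scope ereal_scope.

Lemma indep_sym (X Y : {RV P >-> R}) :
  independent_RV X Y -> independent_RV Y X.
Proof. by move=> h A B mA mB; rewrite setIC h // muleC. Qed.

Lemma identE (X Y : {RV P >-> R}) (f : R -> R) :
  identically_distributed X Y -> measurable_fun setT f ->
  (forall x, 0 <= f x)%R ->
  \int[P]_w (f (Y w))%:E = \int[P]_w (f (X w))%:E.
Proof.
move=> h mf f0.
have mf' : measurable_fun setT (EFin \o f) by apply/measurable_EFinP.
transitivity (\int[distribution P Y]_y (f y)%:E).
  by rewrite ge0_integral_distribution // => y; rewrite lee_fin.
transitivity (\int[distribution P X]_y (f y)%:E).
  by apply: eq_measure_integral => A mA _; exact: (esym (h A mA)).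
by rewrite ge0_integral_distribution // => y; rewrite lee_fin.
Qed.

Lemma aeY (X Y : {RV P >-> R}) (c : R) : identically_distributed X Y ->
  {ae P, forall w, `|X w| <= c}%R -> {ae P, forall w, `|Y w| <= c}%R.
Proof.
move=> h [N [mN PN sub]].
pose B := [set t : R | c < `|t|]%R.
have mB : measurable B.
  have -> : B = (Num.norm : R -> R) @^-1` `]c, +oo[%classic.
    by apply/seteqP; split => t /=; rewrite in_itv /= andbT.
  have := normr_measurable measurableT (measurable_itv `]c, +oo[).
  by rewrite setTI.
exists (Y @^-1` B); split.
- exact: measurable_funPTI.
- have e := h B mB; rewrite /distribution /pushforward /= in e.
  rewrite -e; apply/eqP; rewrite eq_le measure_ge0 andbT -PN.
  apply: le_measure; rewrite ?inE //; first exact: measurable_funPTI.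
  move=> w /= hw; apply: sub => /= hle.
  by move: hw; rewrite /B /= ltNge hle.
- move=> w /= hw; rewrite /B /= ltNge; apply/negP => hle; exact: hw.
Qed.

Lemma fin_bd (h : T -> R) (C : R) : measurable_fun setT h ->
  (forall w, 0 <= h w)%R -> {ae P, forall w, h w <= C}%R ->
  \int[P]_w (h w)%:E \is a fin_num.
Proof.
move=> mh h0 hC.
rewrite ge0_fin_numE; last by apply: integral_ge0 => w _; rewrite lee_fin.
apply: (@le_lt_trans _ _ (\int[P]_w (cst (Num.max C 0)%:E) w)).
  apply: ae_ge0_le_integral => //.
  - by move=> w _; rewrite lee_fin.
  - exact/measurable_EFinP.
  - by move=> w _; rewrite lee_fin le_max lexx orbT.
  - apply: filterS hC => w hw _; rewrite lee_fin /=.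
    by apply: le_trans hw _; rewrite le_max lexx.
rewrite integral_cst //.
apply: lte_mul_pinfty; first by rewrite lee_fin le_max lexx orbT.
  by [].
by rewrite ltey_eq fin_num_measure.
Qed.

Lemma intD (f g : T -> R) : measurable_fun setT f -> measurable_fun setT g ->
  (forall w, 0 <= f w)%R -> (forall w, 0 <= g w)%R ->
  \int[P]_w ((f w + g w)%:E) = \int[P]_w (f w)%:E + \int[P]_w (g w)%:E.
Proof.
move=> mf mg f0 g0.
rewrite (eq_integral (fun w => (f w)%:E + (g w)%:E)); last by move=> w _; rewrite EFinD.
apply: ge0_integralD => //.
- by move=> w _; rewrite lee_fin.
- exact/measurable_EFinP.
- by move=> w _; rewrite lee_fin.
- exact/measurable_EFinP.
Qed.

Lemma intPN (h : T -> R) :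
  \int[P]_w (h w)%:E = \int[P]_w (pos R (h w))%:E - \int[P]_w (neg R (h w))%:E.
Proof.
rewrite integralE; congr (_ - _); apply: eq_integral => w _.
  by rewrite funeposE /pos EFin_max.
by rewrite funenegE /neg EFin_max.
Qed.

Lemma prodE (X Y : {RV P >-> R}) (f g : R -> R) :
  independent_RV X Y ->
  measurable_fun setT f -> measurable_fun setT g ->
  (forall x, (0 <= f x)%R) -> (forall x, (0 <= g x)%R) ->
  \int[P]_w (f (X w) * g (Y w))%:E =
  \int[P]_w (f (X w))%:E * \int[P]_w (g (Y w))%:E.
Proof.
move=> iXY mf mg f0 g0.
have mXY : measurable_fun setT (fun w => (X w, Y w)).
  by apply: measurable_fun_pair.
pose XY : {mfun T >-> (R * R)%type} := HB.pack (fun w => (X w, Y w))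
   (isMeasurableFun.Build _ _ _ _ _ mXY).
have mh : measurable_fun setT (fun z : (R * R)%type => (f z.1 * g z.2)%:E).
  apply/measurable_EFinP; apply: measurable_funM.
    exact: measurableT_comp mf measurable_fst.
  exact: measurableT_comp mg measurable_snd.
have h0 (z : (R*R)%type) : 0 <= (f z.1 * g z.2)%:E by rewrite lee_fin mulr_ge0.
transitivity (\int[distribution P XY]_z (f z.1 * g z.2)%:E).
  by rewrite ge0_integral_distribution.
transitivity (\int[distribution P X \x distribution P Y]_z (f z.1 * g z.2)%:E).
  apply: eq_measure_integral => A mA _.
  apply/esym.
  have H := @product_measure_unique _ _ _ _ _ (distribution P X) (distribution P Y) (distribution P XY).
  by apply: H.
rewrite fubini_tonelli1 //.
rewrite /fubini_F /=.
have mf' : measurable_fun setT (fun x : R => (f x)%:E) by apply/measurable_EFinP.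
have mg' : measurable_fun setT (fun x : R => (g x)%:E) by apply/measurable_EFinP.
transitivity (\int[distribution P X]_x (\int[distribution P Y]_y (g y)%:E * (f x)%:E)).
  apply: eq_integral => x _.
  rewrite muleC -ge0_integralZl //; last by rewrite lee_fin.
  by move=> y _; rewrite lee_fin.
rewrite ge0_integralZl //; last by apply: integral_ge0 => y _; rewrite lee_fin.
  rewrite muleC; congr (_ * _).
    by rewrite ge0_integral_distribution // => y; rewrite lee_fin.
  by rewrite ge0_integral_distribution // => y; rewrite lee_fin.
by move=> y _; rewrite lee_fin.
Qed.
End Meas.

Unset Implicit Arguments.

Ltac nt ev phip0 phin0 M0 := repeat first [ apply: addr_ge0 | apply: mulr_ge0
  | exact: pos_ge0 | exact: neg_ge0 | exact: phip0 | exact: phin0 | exact: ev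
  | apply: exprn_ge0 | exact: normr_ge0 | exact: (ltW M0) ].

Lemma pos_le (R : realType) (t : R) : pos R t <= `|t|.
Proof. by rewrite /pos ge_max ler_norm normr_ge0. Qed.
Lemma neg_le (R : realType) (t : R) : neg R t <= `|t|.
Proof. by rewrite /neg ge_max -normrN ler_norm normr_ge0. Qed.
Lemma pow_le (R : realType) (a b : R) k : 0 <= a -> a <= b -> a ^+ k <= b ^+ k.
Proof. move=> a0 ab; apply: (lerXn2r k) => //; rewrite nnegrE //; exact: le_trans ab. Qed.

Theorem proposition1 (d : measure_display) (T : measurableType d)
  (R : realType) (P : probability T R) (X Y : {RV P >-> R})
  (n : nat) (M : R) :
  (0 < n)%N -> 0 < M ->
  independent_RV X Y -> identically_distributed X Y ->
  {ae P, forall w,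
     `|X w| <= (((2 * n - 1)%N%:R / (3 * M)) `^ (1 / (2 * n - 1)%N%:R))} ->
  (forall j : nat, (1 <= j <= n)%N ->
     ('E_P[(fun w => X w ^+ (2 * j - 1))%R] = 0)%E) ->
  (0 <= 'E_P[(fun w => `|X w - Y w| ^+ (2 * n + 1))%R]
        - 2%:E * 'E_P[(fun w => X w ^+ (2 * n + 1))%R]
        - M%:E * ('E_P[(fun w => X w ^+ (2 * n))%R]) ^+ 2)%E.
Proof.
move=> n0 M0 iXY idXY hb hmom.
rewrite subn1 in hb; rewrite !addn1.
set c := ((2 * n).-1%:R / (3 * M)) `^ (1 / (2 * n).-1%:R) in hb.
have c0 : 0 <= c by exact: powR_ge0.
have k0 : (2 * n).-1%:R != 0 :> R.
  by rewrite pnatr_eq0; apply/eqP; lia.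
have MK : M * c ^+ (2 * n).-1 <= Kc R n.
  rewrite /c -powR_mulrn ?powR_ge0 // -powRrM div1r mulVf // powRr1; last first.
    by apply: divr_ge0; [rewrite ler0n | apply: mulr_ge0 => //; apply: ltW].
  rewrite /Kc le_eqVlt; apply/orP; left; apply/eqP; field.
  by rewrite gt_eqF.
have hbY := aeY idXY hb.
have hXY : {ae P, forall w, `|X w| <= c /\ `|Y w| <= c}.
  by apply: filterS2 hb hbY => w h1 h2.
have [K0 _ _] := consts R n n0.
have ev : forall x : R, 0 <= x ^+ (2 * n) by move=> x; rewrite exprM; exact: exprn_ge0 (sqr_ge0 x).
have mpos : measurable_fun setT (pos R) by rewrite /pos; mt.
have mneg : measurable_fun setT (neg R) by rewrite /neg; mt.
have mphip : measurable_fun setT (phip R n) by rewrite /phip /pos; mt.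
have mphin : measurable_fun setT (phin R n) by rewrite /phin /neg; mt.
have phip0 : forall t, 0 <= phip R n t.
  by move=> t; rewrite /phip; apply: mulr_ge0; [rewrite ler0n | apply: exprn_ge0; exact: pos_ge0].
have phin0 : forall t, 0 <= phin R n t.
  by move=> t; rewrite /phin; apply: mulr_ge0 => //; apply: exprn_ge0; exact: neg_ge0.
have key : (\int[P]_w (Rhs R n M (X w) (Y w))%:E <= \int[P]_w (Lhs R n (X w) (Y w))%:E)%E.
  apply: ae_ge0_le_integral => //.
  - by move=> w _; rewrite lee_fin /Rhs; nt ev phip0 phin0 M0.
  - by apply/measurable_EFinP; rewrite /Rhs /phip /phin /pos /neg; mt.
  - by move=> w _; rewrite lee_fin /Lhs; nt ev phip0 phin0 M0.
  - by apply/measurable_EFinP; rewrite /Lhs /phip /phin /pos /neg; mt.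
  - apply: filterS hXY => w [h1 h2] _; rewrite lee_fin.
    exact: (@LR R n n0 M c (X w) (Y w) (ltW M0) MK h1 h2).
rewrite /Lhs /Rhs in key.
rewrite !intD in key; try (by rewrite /phip /phin /pos /neg; mt);
  try (by move=> w /=; nt ev phip0 phin0 M0).
have iYX := indep_sym iXY.
have pos0 : forall t : R, 0 <= pos R t by exact: pos_ge0.
have neg0 : forall t : R, 0 <= neg R t by exact: neg_ge0.
have pN0 : forall t : R, 0 <= pos R (t ^+ (2 * n).+1) by move=> t; exact: pos_ge0.
have nN0 : forall t : R, 0 <= neg R (t ^+ (2 * n).+1) by move=> t; exact: neg_ge0.
have mpN : measurable_fun setT (fun t : R => pos R (t ^+ (2 * n).+1)) by rewrite /pos; mt.
have mnN : measurable_fun setT (fun t : R => neg R (t ^+ (2 * n).+1)) by rewrite /neg; mt.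
have mXm : measurable_fun setT (fun t : R => t ^+ (2 * n)) by mt.
have mMXm : measurable_fun setT (fun t : R => M * t ^+ (2 * n)) by mt.
have MXm0 : forall t : R, 0 <= M * t ^+ (2 * n) by move=> t; apply: mulr_ge0 => //; exact: ltW.
rewrite (prodE (f := fun t => M * t ^+ (2 * n)) (g := fun t => t ^+ (2 * n)) iXY) // in key.
rewrite (prodE (f := neg R) (g := phip R n) iXY) // in key.
rewrite (prodE (f := pos R) (g := phin R n) iXY) // in key.
rewrite (prodE (f := neg R) (g := phip R n) iYX) // in key.
rewrite (prodE (f := pos R) (g := phin R n) iYX) // in key.
rewrite (prodE (f := pos R) (g := phip R n) iXY) // in key.
rewrite (prodE (f := neg R) (g := phin R n) iXY) // in key.
rewrite (prodE (f := pos R) (g := phip R n) iYX) // in key.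
rewrite (prodE (f := neg R) (g := phin R n) iYX) // in key.
rewrite (identE (f := fun t => pos R (t ^+ (2 * n).+1)) idXY) // in key.
rewrite (identE (f := fun t => neg R (t ^+ (2 * n).+1)) idXY) // in key.
rewrite (identE (f := fun t => t ^+ (2 * n)) idXY) // in key.
rewrite (identE (f := pos R) idXY) // in key.
rewrite (identE (f := neg R) idXY) // in key.
have eM : (\int[P]_w (M * X w ^+ (2 * n))%:E = M%:E * \int[P]_w (X w ^+ (2 * n))%:E)%E.
  rewrite -ge0_integralZl //; try (by apply/measurable_EFinP; mt);
    try (by move=> w _; rewrite lee_fin ev); try (by rewrite lee_fin ltW).
rewrite eM in key.
have h1 : (\int[P]_w (pos R (X w))%:E - \int[P]_w (neg R (X w))%:E = 0)%E.
  rewrite -intPN; have := hmom 1%N n0; rewrite unlock => h; rewrite -h.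
  by apply: eq_integral => w _; rewrite expr1.
rewrite unlock /=.
rewrite (intPN P (fun w => X w ^+ (2 * n).+1)) /=.
have fe1 : (\int[P]_w (`|X w - Y w| ^+ (2 * n).+1)%:E)%E \is a fin_num.
  apply: (fin_bd (C := (c + c) ^+ (2 * n).+1)); first by mt.
    by move=> w; apply: exprn_ge0.
  apply: filterS hXY => w [h1' h2']; apply: pow_le => //.
  by apply: le_trans (ler_normB _ _) _; apply: lerD.
have fpN : (\int[P]_w (pos R (X w ^+ (2 * n).+1))%:E)%E \is a fin_num.
  apply: (fin_bd (C := c ^+ (2 * n).+1)); first by rewrite /pos; mt.
    by [].
  apply: filterS hb => w h; apply: le_trans (pos_le _ _) _.
  by rewrite normrX; apply: pow_le.
have fnN : (\int[P]_w (neg R (X w ^+ (2 * n).+1))%:E)%E \is a fin_num.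
  apply: (fin_bd (C := c ^+ (2 * n).+1)); first by rewrite /neg; mt.
    by [].
  apply: filterS hb => w h; apply: le_trans (neg_le _ _) _.
  by rewrite normrX; apply: pow_le.
have fs : (\int[P]_w (X w ^+ (2 * n))%:E)%E \is a fin_num.
  apply: (fin_bd (C := c ^+ (2 * n))); first by mt.
    by [].
  apply: filterS hb => w h; apply: le_trans (ler_norm _) _.
  by rewrite normrX; apply: pow_le.
have fa : (\int[P]_w (pos R (X w))%:E)%E \is a fin_num.
  apply: (fin_bd (C := c)); first by rewrite /pos; mt.
    by [].
  by apply: filterS hb => w h; apply: le_trans (pos_le _ _) _.
have fb : (\int[P]_w (neg R (X w))%:E)%E \is a fin_num.
  apply: (fin_bd (C := c)); first by rewrite /neg; mt.
    by [].
  by apply: filterS hb => w h; apply: le_trans (neg_le _ _) _.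
have fqX : (\int[P]_w (phip R n (X w))%:E)%E \is a fin_num.
  apply: (fin_bd (C := ((2 * n).+1)%:R * c ^+ (2 * n))); first by rewrite /phip /pos; mt.
    by [].
  apply: filterS hb => w h; rewrite /phip; apply: ler_wpM2l; first by rewrite ler0n.
  by apply: pow_le => //; apply: le_trans (pos_le _ _) _.
have frX : (\int[P]_w (phin R n (X w))%:E)%E \is a fin_num.
  apply: (fin_bd (C := Kc R n * c ^+ (2 * n))); first by rewrite /phin /neg; mt.
    by [].
  apply: filterS hb => w h; rewrite /phin; apply: ler_wpM2l => //.
  by apply: pow_le => //; apply: le_trans (neg_le _ _) _.
have fqY : (\int[P]_w (phip R n (Y w))%:E)%E \is a fin_num.
  apply: (fin_bd (C := ((2 * n).+1)%:R * c ^+ (2 * n))); first by rewrite /phip /pos; mt.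
    by [].
  apply: filterS hbY => w h; rewrite /phip; apply: ler_wpM2l; first by rewrite ler0n.
  by apply: pow_le => //; apply: le_trans (pos_le _ _) _.
have frY : (\int[P]_w (phin R n (Y w))%:E)%E \is a fin_num.
  apply: (fin_bd (C := Kc R n * c ^+ (2 * n))); first by rewrite /phin /neg; mt.
    by [].
  apply: filterS hbY => w h; rewrite /phin; apply: ler_wpM2l => //.
  by apply: pow_le => //; apply: le_trans (neg_le _ _) _.
move: fe1 fpN fnN fs fa fb fqX frX fqY frY key h1.
set E1 := (\int[P]_w (`|X w - Y w| ^+ (2 * n).+1)%:E)%E.
set PN := (\int[P]_w (pos R (X w ^+ (2 * n).+1))%:E)%E.
set NN := (\int[P]_w (neg R (X w ^+ (2 * n).+1))%:E)%E.
set S := (\int[P]_w (X w ^+ (2 * n))%:E)%E.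
set A := (\int[P]_w (pos R (X w))%:E)%E.
set B := (\int[P]_w (neg R (X w))%:E)%E.
set QX := (\int[P]_w (phip R n (X w))%:E)%E.
set RX := (\int[P]_w (phin R n (X w))%:E)%E.
set QY := (\int[P]_w (phip R n (Y w))%:E)%E.
set RY := (\int[P]_w (phin R n (Y w))%:E)%E.
move=> /fineK <- /fineK <- /fineK <- /fineK <- /fineK <- /fineK <- /fineK <- /fineK <- /fineK <- /fineK <-.
generalize (fine E1) (fine PN) (fine NN) (fine S) (fine A) (fine B) (fine QX)
  (fine RX) (fine QY) (fine RY) => e1 pn nn s a b qx rx qy ry.
rewrite -?EFinM -?EFinD -?EFinB ?lee_fin => key' [h1'].
rewrite -?EFinM -?EFinB ?lee_fin.
have ab : a = b by lra.
subst a.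
lra.
Qed.
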